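(* Let $A$ be a uniform algebra, let $\theta : A\to M_n(\mathbb{C})$ be a continuous unital homomorphism, and let $\alpha : A\to A$ be a unital antilinear contraction such that $$\theta_\alpha(f):=\tfrac12\bigl(\theta(f)+\theta(\alpha(f))^*\bigr)$$ satisfies $\|\theta_\alpha\|\le 1$. Then for every $f\in A$, $$W(\theta_\alpha(f))\subset \operatorname{conv}(\sigma(f)).$$
   Context: A uniform algebra is a norm-closed subalgebra of $C(X)$, for $X$ a compact Hausdorff space, containing the constants, with the supremum norm. A map $\alpha$ is antilinear if $\alpha(\lambda f+g)=\overline\lambda\alpha(f)+\alpha(g)$. It is a contraction if $\|\alpha(f)\|\le\|f\|$, and it is unital if $\alpha(1)=1$. $W(T)=\{\langle Tx,x\rangle:\|x\|=1\}$ denotes the numerical range of a matrix $T$. $\sigma(f)$ is the spectrum of $f$ as an element of $A$, and $\operatorname{conv}$ denotes convex hull. *)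

(* Defs.v *)
From HB Require Import structures.
From mathcomp Require Import all_boot all_order all_algebra.
From mathcomp Require Import classical_sets reals topology.
From mathcomp Require Import complex.
Set Implicit Arguments. Unset Strict Implicit. Unset Printing Implicit Defensive.
Import Order.TTheory GRing.Theory Num.Theory.
Local Open Scope ring_scope.
Local Open Scope classical_set_scope.

Section Defs.
Variable R : realType.
Local Notation C := R[i].

Definition ccontinuous (X : topologicalType) (f : X -> C) : Prop :=
  forall (x : X) (e : R), 0 < e ->
    nbhs x (fun y => `|f y - f x| < (e%:C)%C).

Definition uniform_algebra (X : topologicalType) (A : set (X -> C)) : Prop :=
  [/\ compact [set: X], hausdorff_space X &
      (forall f, A f -> ccontinuous f)] /\
  [/\
      (forall c : C, A (fun _ => c)),
      (forall (a : C) f g, A f -> A g -> A (fun x => a * f x + g x)),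
      (forall f g, A f -> A g -> A (fun x => f x * g x)) &
      (forall (u : nat -> X -> C) (g : X -> C), (forall k, A (u k)) ->
         (forall e : R, 0 < e -> exists N : nat, forall k, (N <= k)%N ->
            forall x, `|u k x - g x| < (e%:C)%C) ->
         A g)].

Definition supnorm_le (X : Type) (f : X -> C) (c : R) : Prop :=
  forall x, `|f x| <= (c%:C)%C.

Definition vnorm (n : nat) (v : 'cV[C]_n) : C :=
  sqrtC (\sum_i `|v i 0| ^+ 2).

Definition opnorm_le (n : nat) (T : 'M[C]_n) (c : R) : Prop :=
  forall v : 'cV[C]_n, vnorm (T *m v) <= (c%:C)%C * vnorm v.

Definition adjmx (m n : nat) (T : 'M[C]_(m, n)) : 'M[C]_(n, m) :=
  (map_mx Num.conj T)^T.

Definition unital_hom (X : Type) (A : set (X -> C)) (n : nat)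
    (theta : (X -> C) -> 'M[C]_n) : Prop :=
  [/\ (forall (a : C) f g, A f -> A g ->
         theta (fun x => a * f x + g x) = a *: theta f + theta g),
      (forall f g, A f -> A g -> theta (fun x => f x * g x) = theta f *m theta g) &
      theta (fun _ => 1) = 1%:M].

Definition hom_continuous (X : Type) (A : set (X -> C)) (n : nat)
    (theta : (X -> C) -> 'M[C]_n) : Prop :=
  exists K : R, forall f c, A f -> supnorm_le f c -> opnorm_le (theta f) (K * c).

Definition antilinear (X : Type) (A : set (X -> C)) (alpha : (X -> C) -> X -> C) : Prop :=
  forall (a : C) f g, A f -> A g ->
    alpha (fun x => a * f x + g x) = (fun x => a^* * alpha f x + alpha g x).

Definition theta_alpha (X : Type) (n : nat) (theta : (X -> C) -> 'M[C]_n)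
    (alpha : (X -> C) -> X -> C) (f : X -> C) : 'M[C]_n :=
  (2 : C)^-1 *: (theta f + adjmx (theta (alpha f))).

Definition numrange (n : nat) (T : 'M[C]_n) : set C :=
  [set z | exists x : 'cV[C]_n, vnorm x = 1 /\ z = (adjmx x *m (T *m x)) 0 0].

Definition spectrum (X : Type) (A : set (X -> C)) (f : X -> C) : set C :=
  [set l | ~ exists g, A g /\ forall x, (f x - l) * g x = 1].

Definition conv (S : set C) : set C :=
  [set z | exists (m : nat) (w : 'I_m -> R) (s : 'I_m -> C),
     [/\ forall i, 0 <= w i, \sum_i w i = 1, forall i, S (s i) &
         z = \sum_i ((w i)%:C)%C * s i]].

End Defs.

(* Main.v *)
Require Import Defs.
From HB Require Import structures.
From mathcomp Require Import all_boot all_order all_algebra.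
From mathcomp Require Import classical_sets reals topology.
From mathcomp Require Import complex.
From mathcomp Require Import normedtype derive realfun ring lra boolp.
Import Order.TTheory GRing.Theory Num.Theory.
Import numFieldNormedType.Exports.
Local Open Scope ring_scope.
Local Open Scope classical_set_scope.

Lemma cmin (R : realType) (X : topologicalType) (h : X -> R) (x0 : X) :
  compact [set: X] -> continuous h -> exists xm, forall x, h xm <= h x.
Proof.
move=> cX ch.
have [c _ Hc] := compact_EVT_min (A := [set: X]) (ex_intro _ x0 I) cX
   (continuous_subspaceT ch).
by exists c => x; apply: Hc; rewrite in_setT.
Qed.

Lemma cmax (R : realType) (X : topologicalType) (h : X -> R) (x0 : X) :
  compact [set: X] -> continuous h -> exists xm, forall x, h x <= h xm.
Proof.
move=> cX ch.
have [c _ Hc] := compact_EVT_max (A := [set: X]) (ex_intro _ x0 I) cX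
   (continuous_subspaceT ch).
by exists c => x; apply: Hc; rewrite in_setT.
Qed.

Lemma core (R : realType) (X : topologicalType) (cX : compact [set: X])
  (gx gy : X -> R) (cgx : continuous gx) (cgy : continuous gy) (x0 : X)
  (h0 : gy x0 = 0) (hray : forall x, gy x = 0 -> 0 < gx x)
  (NS : forall vx vy d : R, 0 < d -> (forall x, d <= vx * gx x + vy * gy x) -> False) :
  exists x1 x2 x3 (l1 l2 l3 : R), [/\ 0 <= l1, 0 <= l2, 0 <= l3, l1 + l2 + l3 = 1 &
     l1 * gx x1 + l2 * gx x2 + l3 * gx x3 = 0 /\
     l1 * gy x1 + l2 * gy x2 + l3 * gy x3 = 0].
Proof.
pose N x := Num.sqrt (gx x ^+ 2 + gy x ^+ 2).
have N0 x : 0 <= N x by apply: sqrtr_ge0.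
have N2 x : N x ^+ 2 = gx x ^+ 2 + gy x ^+ 2.
  by rewrite sqr_sqrtr // addr_ge0 // sqr_ge0.
pose s x := N x + gx x.
have s0 x : 0 < s x.
  rewrite /s; have := N0 x; have := N2 x.
  have [/eqP e|ne] := boolP (gy x == 0).
    have := hray x e; rewrite e; nra.
  have : 0 < gy x ^+ 2 by rewrite lt_def sqrf_eq0 ne sqr_ge0.
  nra.
pose t x := gy x / s x.
have cN : continuous N.
  move=> x; apply: (@continuous_comp _ _ _ (fun x => gx x ^+ 2 + gy x ^+ 2) Num.sqrt).
    have -> : (fun x => gx x ^+ 2 + gy x ^+ 2) = (gx \* gx) \+ (gy \* gy).
      by apply: funext => y; rewrite /= !expr2.
    by apply: continuousD; apply: continuousM; [apply: cgx|apply: cgx|apply: cgy|apply: cgy].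
  exact: sqrt_continuous.
have ct : continuous t.
  move=> x; apply: (continuousM (s:=gy) (t:=fun y => (s y)^-1)); first exact: cgy.
  apply: continuousV; first by rewrite gt_eqF.
  by apply: continuousD; [apply: cN|apply: cgx].
have ex x : gx x = s x / 2 * (1 - t x ^+ 2).
  rewrite /t; have := s0 x; have := N2 x; rewrite /s => H2 Hs.
  have -> : (N x + gx x) / 2 * (1 - (gy x / (N x + gx x)) ^+ 2) =
     ((N x + gx x)^+2 - gy x ^+ 2) / (2 * (N x + gx x)).
    by field; rewrite gt_eqF.
  have -> : (N x + gx x)^+2 - gy x ^+ 2 = 2 * (N x + gx x) * gx x.
    by rewrite sqrrD H2; ring.
  by field; rewrite gt_eqF.
have ey x : gy x = s x / 2 * (2 * t x).
  by rewrite /t; field; rewrite gt_eqF.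
have [xu Hu] := @cmax _ _ t x0 cX ct.
have [xl Hl] := @cmin _ _ t x0 cX ct.
have t0 : t x0 = 0 by rewrite /t h0 mul0r.
set u := t xu in Hu; set l := t xl in Hl.
have u0 : 0 <= u by rewrite -t0 Hu.
have l0 : l <= 0 by rewrite -t0 Hl.
have sx0 := s0 x0; have sxu := s0 xu; have sxl := s0 xl.
have [hc|hc] := lerP (1 + u * l) 0.
  have up : 0 < u.
    by rewrite lt_neqAle u0 andbT; apply/eqP => E; move: hc; rewrite -E mul0r addr0 ler10.
  pose m0 := 2 * ((l - u) * (1 + u * l)) / s x0.
  pose mu := 2 * (- l) / s xu.
  pose ml := 2 * u / s xl.
  have m00 : 0 <= m0 by rewrite /m0 divr_ge0 ?(ltW sx0) // mulr_ge0 // nmulr_rge0 //; lra.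
  have mu0 : 0 <= mu by rewrite /mu divr_ge0 ?(ltW sxu) //; lra.
  have ml0 : 0 < ml by rewrite /ml divr_gt0 //; lra.
  pose S := m0 + mu + ml.
  have S0 : 0 < S by rewrite /S; lra.
  exists x0, xu, xl, (m0 / S), (mu / S), (ml / S); split.
  - by rewrite divr_ge0 // ltW.
  - by rewrite divr_ge0 // ltW.
  - by rewrite divr_ge0 // ltW.
  - by rewrite -!mulrDl divff // gt_eqF.
  split.
    rewrite !ex t0 -/u -/l /m0 /mu /ml.
    by field; rewrite !gt_eqF.
  rewrite !ey t0 -/u -/l /m0 /mu /ml.
  by field; rewrite !gt_eqF.
exfalso.
pose e := (1 + l * u) / (2 * (1 - l)).
have e0 : 0 < e by rewrite /e divr_gt0 //; lra.
pose r2 := u + e.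
have r20 : 0 < r2 by rewrite /r2; lra.
have key : (1 + l * u + l * e) * (2 * (1 - l)) = (1 + l * u) * (2 - l).
  by rewrite /e; field; rewrite gt_eqF //; lra.
have k1 : 0 < 1 + l * u + l * e.
  have : 0 < (1 + l * u) * (2 - l) by apply: mulr_gt0; lra.
  rewrite -key => H; have H2 : 0 < 2 * (1 - l) by lra.
  nra.
have k2 : 0 < l + 1 / r2.
  have -> : l + 1 / r2 = (1 + l * u + l * e) / r2 by rewrite /r2; field; rewrite gt_eqF.
  by rewrite divr_gt0.
pose c := r2 - 1 / r2.
pose h x := 1 * gx x + c / 2 * gy x.
have hpos x : 0 < h x.
  have -> : h x = s x / 2 * ((t x + 1 / r2) * (r2 - t x)).
    by rewrite /h ex ey /c; field; rewrite gt_eqF.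
  have := Hl x; have := Hu x; rewrite -/l -/u => ? ?.
  apply: mulr_gt0; first by rewrite divr_gt0.
  apply: mulr_gt0; rewrite /r2; lra.
have ch : continuous h.
  move=> x; apply: (continuousD (f:=fun y => 1 * gx y) (g:=fun y => c / 2 * gy y)).
    by apply: (continuousM (s:=fun=> 1) (t:=gx)); [apply: cst_continuous|apply: cgx].
  by apply: (continuousM (s:=fun=> c / 2) (t:=gy)); [apply: cst_continuous|apply: cgy].
have [xm Hm] := @cmin _ _ h x0 cX ch.
by apply: (NS 1 (c / 2) (h xm) (hpos xm)).
Qed.

Lemma geo0 (R : realType) (X : topologicalType) (cX : compact [set: X])
  (fx fy : X -> R) (cfx : continuous fx) (cfy : continuous fy)
  (NS : forall vx vy d : R, 0 < d -> (forall x, d <= vx * fx x + vy * fy x) -> False) :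
  exists x1 x2 x3 (l1 l2 l3 : R), [/\ 0 <= l1, 0 <= l2, 0 <= l3, l1 + l2 + l3 = 1 &
     l1 * fx x1 + l2 * fx x2 + l3 * fx x3 = 0 /\
     l1 * fy x1 + l2 * fy x2 + l3 * fy x3 = 0].
Proof.
have [x0 _] : exists x0 : X, True.
  apply/not_existsP => H; apply: (NS 0 0 1 ltr01) => x.
  by exfalso; apply: (H x).
have [[z [zx zy]]|nz] := pselect (exists z, fx z = 0 /\ fy z = 0).
  exists z, z, z, 1, 0, 0; split => //; try lra.
pose a := fx x0; pose b := fy x0.
have n1 : 0 < a ^+ 2 + b ^+ 2.
  have [/eqP ea|ea] := boolP (a == 0).
    have [/eqP eb|eb] := boolP (b == 0).
      by exfalso; apply: nz; exists x0.
    have : 0 < b ^+ 2 by rewrite lt_def sqrf_eq0 eb sqr_ge0.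
    have := sqr_ge0 a; lra.
  have : 0 < a ^+ 2 by rewrite lt_def sqrf_eq0 ea sqr_ge0.
  have := sqr_ge0 b; lra.
have [[z [zc zd]]|nneg] := pselect (exists z, a * fy z - b * fx z = 0 /\ a * fx z + b * fy z < 0).
  pose D := a * fx z + b * fy z; pose n := a ^+ 2 + b ^+ 2.
  exists x0, z, z, (- D / (n - D)), (n / (n - D)), 0; split.
  - rewrite divr_ge0 //; rewrite /D /n; lra.
  - rewrite divr_ge0 //; rewrite /D /n; lra.
  - by [].
  - by rewrite addr0; field; rewrite gt_eqF // /D /n; lra.
  split.
  + rewrite -/a mul0r addr0 /D /n.
    have hnD : a ^+ 2 + b ^+ 2 - (a * fx z + b * fy z) != 0 by rewrite gt_eqF //; lra.
    set W := (X in _ / X).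
    have -> : - (a * fx z + b * fy z) / W * a + (a ^+ 2 + b ^+ 2) / W * fx z =
       b * (b * fx z - a * fy z) / W by field.
    by rewrite (_ : b * fx z - a * fy z = 0) ?mulr0 ?mul0r //; lra.
  + rewrite -/b mul0r addr0 /D /n.
    have hnD : a ^+ 2 + b ^+ 2 - (a * fx z + b * fy z) != 0 by rewrite gt_eqF //; lra.
    set W := (X in _ / X).
    have -> : - (a * fx z + b * fy z) / W * b + (a ^+ 2 + b ^+ 2) / W * fy z =
       a * (a * fy z - b * fx z) / W by field.
    by rewrite (_ : a * fy z - b * fx z = 0) ?mulr0 ?mul0r //; lra.
pose gx x := a * fx x + b * fy x.
pose gy x := a * fy x - b * fx x.
have cl (k : R) (h : X -> R) : continuous h -> continuous (fun x => k * h x).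
  by move=> ch x; apply: (continuousM (s:=fun=> k) (t:=h)); [apply: cst_continuous|apply: ch].
have cgx : continuous gx.
  by move=> x; apply: (continuousD (f:=fun y => a * fx y) (g:=fun y => b * fy y)); apply: cl.
have cgy : continuous gy.
  by move=> x; apply: (continuousB (f:=fun y => a * fy y) (g:=fun y => b * fx y)); apply: cl.
have inv x : (a ^+ 2 + b ^+ 2) * fx x = a * gx x - b * gy x /\
             (a ^+ 2 + b ^+ 2) * fy x = b * gx x + a * gy x.
  by rewrite /gx /gy; split; ring.
have h0 : gy x0 = 0 by rewrite /gy -/a -/b; ring.
have hray x : gy x = 0 -> 0 < gx x.
  move=> e; rewrite lt_neqAle; apply/andP; split.
    apply/eqP => e'; apply: nz; exists x; have [i1 i2] := inv x.
    move: i1 i2; rewrite -e' e !mulr0 subr0 addr0 => /eqP i1 /eqP i2.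
    by move: i1 i2; rewrite !mulf_eq0 !(gt_eqF n1) /= => /eqP -> /eqP ->.
  rewrite leNgt; apply/negP => lt; apply: nneg; exists x; split => //.
have NSg vx vy d : 0 < d -> (forall x, d <= vx * gx x + vy * gy x) -> False.
  move=> d0 H; apply: (NS (vx * a - vy * b) (vx * b + vy * a) d d0) => x.
  have := H x; rewrite /gx /gy => H'.
  by have -> : (vx * a - vy * b) * fx x + (vx * b + vy * a) * fy x =
     vx * (a * fx x + b * fy x) + vy * (a * fy x - b * fx x) by ring.
have [x1 [x2 [x3 [l1 [l2 [l3 [p1 p2 p3 p4 [q1 q2]]]]]]]] :=
  @core _ _ cX gx gy cgx cgy x0 h0 hray NSg.
exists x1, x2, x3, l1, l2, l3; split => //; split.
  suff: (a ^+ 2 + b ^+ 2) * (l1 * fx x1 + l2 * fx x2 + l3 * fx x3) = 0.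
    by move/eqP; rewrite mulf_eq0 (gt_eqF n1) => /eqP.
  have [i1 _] := inv x1; have [i2 _] := inv x2; have [i3 _] := inv x3.
  transitivity (l1 * ((a ^+ 2 + b ^+ 2) * fx x1) + l2 * ((a ^+ 2 + b ^+ 2) * fx x2) +
                l3 * ((a ^+ 2 + b ^+ 2) * fx x3)); first by ring.
  rewrite i1 i2 i3.
  transitivity (a * (l1 * gx x1 + l2 * gx x2 + l3 * gx x3) - b * (l1 * gy x1 + l2 * gy x2 + l3 * gy x3)); first by ring.
  by rewrite q1 q2; ring.
suff: (a ^+ 2 + b ^+ 2) * (l1 * fy x1 + l2 * fy x2 + l3 * fy x3) = 0.
  by move/eqP; rewrite mulf_eq0 (gt_eqF n1) => /eqP.
have [_ i1] := inv x1; have [_ i2] := inv x2; have [_ i3] := inv x3.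
transitivity (l1 * ((a ^+ 2 + b ^+ 2) * fy x1) + l2 * ((a ^+ 2 + b ^+ 2) * fy x2) +
              l3 * ((a ^+ 2 + b ^+ 2) * fy x3)); first by ring.
rewrite i1 i2 i3.
transitivity (b * (l1 * gx x1 + l2 * gx x2 + l3 * gx x3) + a * (l1 * gy x1 + l2 * gy x2 + l3 * gy x3)); first by ring.
by rewrite q1 q2; ring.
Qed.

Lemma disk_NS (R : realType) (X : topologicalType) (cX : compact [set: X])
  (fx fy : X -> R) (cfx : continuous fx) (cfy : continuous fy)
  (Disk : forall ax ay r : R, 0 < r ->
     (forall x, (fx x - ax) ^+ 2 + (fy x - ay) ^+ 2 <= r ^+ 2) -> ax ^+ 2 + ay ^+ 2 <= r ^+ 2) :
  forall vx vy d : R, 0 < d -> (forall x, d <= vx * fx x + vy * fy x) -> False.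
Proof.
move=> vx vy d d0 H.
have [[x0 _]|nX] := pselect (exists x : X, True); last first.
  have h12 : (0:R) < 1/2 by lra.
  have H1 := Disk 1 0 (1/2) h12.
  have : (1 : R) ^+ 2 + 0 ^+ 2 <= (1/2) ^+ 2.
    by apply: H1 => x; exfalso; apply: nX; exists x.
  lra.
pose q x := fx x * fx x + fy x * fy x.
have cq : continuous q.
  move=> x; apply: (continuousD (f:=fun y => fx y * fx y) (g:=fun y => fy y * fy y)).
    by apply: (continuousM (s:=fx) (t:=fx)); apply: cfx.
  by apply: (continuousM (s:=fy) (t:=fy)); apply: cfy.
have [xm Hm] := @cmax _ _ q x0 cX cq.
pose B := q xm.
have B0 : 0 <= B by rewrite /B /q; nra.
pose T := (B + 1) / d.
have T0 : 0 < T by rewrite /T divr_gt0 //; lra.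
have Td : T * d = B + 1 by rewrite /T; field; rewrite gt_eqF.
pose V := vx ^+ 2 + vy ^+ 2.
have bnd x : (fx x - T * vx) ^+ 2 + (fy x - T * vy) ^+ 2 <= T ^+ 2 * V - 2.
  have h2 : fx x * fx x + fy x * fy x <= B := Hm x.
  rewrite /V.
  have : T * d <= T * (vx * fx x + vy * fy x) by rewrite ler_pM2l.
  rewrite Td => h3.
  have -> : (fx x - T * vx) ^+ 2 + (fy x - T * vy) ^+ 2 =
    (fx x * fx x + fy x * fy x) - 2 * (T * (vx * fx x + vy * fy x)) + T ^+ 2 * (vx ^+ 2 + vy ^+ 2) by ring.
  lra.
have TV : 2 <= T ^+ 2 * V.
  have := bnd x0; have := sqr_ge0 (fx x0 - T * vx); have := sqr_ge0 (fy x0 - T * vy); lra.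
pose r := Num.sqrt (T ^+ 2 * V - 1).
have r2 : r ^+ 2 = T ^+ 2 * V - 1 by rewrite /r sqr_sqrtr //; lra.
have r0 : 0 < r by rewrite /r sqrtr_gt0; lra.
have := Disk (T * vx) (T * vy) r r0.
have : forall x, (fx x - T * vx) ^+ 2 + (fy x - T * vy) ^+ 2 <= r ^+ 2.
  by move=> x; rewrite r2; have := bnd x; lra.
move=> hh /(_ hh); rewrite r2 /V; nra.
Qed.

Lemma ip_sum (R : realType) (n : nat) (x y : 'cV[R[i]]_n) :
  (adjmx x *m y) 0 0 = \sum_i (Num.conj (x i 0)) * y i 0.
Proof. by rewrite !mxE; apply: eq_bigr => i _; rewrite !mxE. Qed.

Lemma normc_R (R : realType) (w : R[i]) :
  `|w| = (Num.sqrt ((complex.Re w) ^+ 2 + (complex.Im w) ^+ 2))%:C%C.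
Proof. by rewrite normc_def. Qed.

Lemma vnorm2 (R : realType) (n : nat) (v : 'cV[R[i]]_n) :
  vnorm v ^+ 2 = ((\sum_i (Num.sqrt ((complex.Re (v i 0)) ^+ 2 + (complex.Im (v i 0)) ^+ 2)) ^+ 2)%:C)%C.
Proof.
rewrite /vnorm sqrtCK rmorph_sum; apply: eq_bigr => i _.
by rewrite normc_R rmorphXn.
Qed.

Definition nr (R : realType) (w : R[i]) : R :=
  Num.sqrt (complex.Re w ^+ 2 + complex.Im w ^+ 2).
Arguments nr {R}.

Lemma nr_ge0 (R : realType) (w : R[i]) : 0 <= nr w.
Proof. exact: sqrtr_ge0. Qed.

Lemma normc_nr (R : realType) (w : R[i]) : `|w| = ((nr w)%:C)%C.
Proof. exact: normc_R. Qed.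

Lemma vnorm2' (R : realType) (n : nat) (v : 'cV[R[i]]_n) :
  vnorm v ^+ 2 = ((\sum_i nr (v i 0) ^+ 2)%:C)%C.
Proof. exact: vnorm2. Qed.

Lemma vnorm_ge0 (R : realType) (n : nat) (v : 'cV[R[i]]_n) : 0 <= vnorm v.
Proof. by rewrite /vnorm sqrtC_ge0; apply: sumr_ge0 => i _; rewrite exprn_ge0. Qed.

Lemma est (R : realType) (n : nat) (S : 'M[R[i]]_n) (x : 'cV[R[i]]_n) (r : R) :
  0 < r -> vnorm x = 1 -> opnorm_le S r -> `|(adjmx x *m (S *m x)) 0 0| <= (r%:C)%C.
Proof.
move=> r0 hx hS.
set y := S *m x.
have hy : vnorm y <= (r%:C)%C by have := hS x; rewrite hx mulr1.
have sa : \sum_i nr (x i 0) ^+ 2 = 1.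
  by apply: (@complexI R); rewrite -vnorm2' hx expr1n.
have sb : \sum_i nr (y i 0) ^+ 2 <= r ^+ 2.
  rewrite -(@lecR R) -vnorm2' rmorphXn /=.
  by rewrite expr2 [X in _ <= X]expr2 ler_pM // vnorm_ge0.
rewrite ip_sum.
apply: (le_trans (ler_norm_sum _ _ _)).
have -> : \sum_i `|Num.conj (x i 0) * y i 0| = ((\sum_i nr (x i 0) * nr (y i 0))%:C)%C.
  rewrite rmorph_sum; apply: eq_bigr => i _.
  by rewrite normrM norm_conjC !normc_nr rmorphM.
rewrite lecR.
have step i : nr (x i 0) * nr (y i 0) <= r / 2 * nr (x i 0) ^+ 2 + (2 * r)^-1 * nr (y i 0) ^+ 2.
  set p := nr (x i 0); set q := nr (y i 0).
  have : 0 <= (r * p - q) ^+ 2 / (2 * r) by rewrite divr_ge0 ?sqr_ge0 //; lra.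
  have -> : (r * p - q) ^+ 2 / (2 * r) = r / 2 * p ^+ 2 + (2 * r)^-1 * q ^+ 2 - p * q.
    by field; rewrite gt_eqF.
  lra.
apply: (le_trans (ler_sum _ (fun i _ => step i))).
rewrite big_split /= -!mulr_sumr sa mulr1.
have : (2 * r)^-1 * \sum_i nr (y i 0) ^+ 2 <= (2 * r)^-1 * r ^+ 2.
  by rewrite ler_pM2l // invr_gt0; lra.
have -> : (2 * r)^-1 * r ^+ 2 = r / 2 by field; rewrite gt_eqF.
lra.
Qed.

Lemma adj_shift (R : realType) (n : nat) (c : R[i]) (M : 'M[R[i]]_n) :
  adjmx (c *: 1%:M + M) = Num.conj c *: 1%:M + adjmx M.
Proof.
apply/matrixP => i j; rewrite !mxE rmorphD rmorphM /= eq_sym.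
by rewrite conjC_nat.
Qed.

Lemma shift (R : realType) (X : Type) (A : set (X -> R[i]))
  (n : nat) (theta : (X -> R[i]) -> 'M[R[i]]_n) (alpha : (X -> R[i]) -> X -> R[i]) 
  (A1 : A (fun _ => 1)) (hom : unital_hom A theta)
  (Aal : forall f, A f -> A (alpha f)) (anti : antilinear A alpha)
  (al1 : alpha (fun _ => 1) = (fun _ => 1)) (f : X -> R[i]) (Af : A f) (a : R[i]) :
  theta_alpha theta alpha (fun y => (-a) * (fun _ => (1 : R[i])) y + f y) =
  theta_alpha theta alpha f - a *: 1%:M.
Proof.
case: hom => hlin _ h1.
have h1p : theta (fun _ => 1) = 1%:M := h1.
have h1c (c : R[i]) : c = 1 -> theta (fun=> c) = 1%:M by move=> ->; exact: h1.
have Aaf := Aal f Af.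
rewrite /theta_alpha anti // al1 hlin // h1 hlin // h1c //.
rewrite adj_shift conjCK.
apply/matrixP => i j; rewrite !mxE.
by case: (i == j); rewrite /=; field.
Qed.

Lemma ReB (R : realType) (p q : R[i]) : complex.Re (p - q) = complex.Re p - complex.Re q.
Proof. by case: p; case: q. Qed.

Lemma ImB (R : realType) (p q : R[i]) : complex.Im (p - q) = complex.Im p - complex.Im q.
Proof. by case: p; case: q. Qed.

Lemma Re_nr (R : realType) (w : R[i]) : `|complex.Re w| <= nr w.
Proof.
rewrite /nr -sqrtr_sqr; apply: ler_wsqrtr; rewrite lerDl; exact: sqr_ge0.
Qed.

Lemma Im_nr (R : realType) (w : R[i]) : `|complex.Im w| <= nr w.
Proof.
rewrite /nr -sqrtr_sqr; apply: ler_wsqrtr; rewrite lerDr; exact: sqr_ge0.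
Qed.

Lemma cont_Re (R : realType) (X : topologicalType) (g : X -> R[i]) (z : R[i]) :
  ccontinuous g -> continuous (fun y => complex.Re (g y - z)).
Proof.
move=> cg y; apply/cvgrPdist_lt => e e0.
have := cg y e e0; apply: filterS => w hw.
rewrite !ReB (_ : complex.Re (g y) - complex.Re z - (complex.Re (g w) - complex.Re z) =
   - complex.Re (g w - g y)); last by rewrite ReB; ring.
rewrite normrN.
have h1 := @Re_nr _ (g w - g y).
have h2 : nr (g w - g y) < e by move: hw; rewrite normc_nr ltcR.
exact: (le_lt_trans h1 h2).
Qed.

Lemma cont_Im (R : realType) (X : topologicalType) (g : X -> R[i]) (z : R[i]) :
  ccontinuous g -> continuous (fun y => complex.Im (g y - z)).
Proof.
move=> cg y; apply/cvgrPdist_lt => e e0.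
have := cg y e e0; apply: filterS => w hw.
rewrite !ImB (_ : complex.Im (g y) - complex.Im z - (complex.Im (g w) - complex.Im z) =
   - complex.Im (g w - g y)); last by rewrite ImB; ring.
rewrite normrN.
have h1 := @Im_nr _ (g w - g y).
have h2 : nr (g w - g y) < e by move: hw; rewrite normc_nr ltcR.
exact: (le_lt_trans h1 h2).
Qed.

Theorem lemma5p2 (R : realType) (X : topologicalType) (A : set (X -> R[i]))
  (n : nat) (theta : (X -> R[i]) -> 'M[R[i]]_n) (alpha : (X -> R[i]) -> X -> R[i]) :
  uniform_algebra A ->
  unital_hom A theta -> hom_continuous A theta ->
  (forall f, A f -> A (alpha f)) ->
  antilinear A alpha ->
  alpha (fun _ => 1) = (fun _ => 1) ->
  (forall f c, A f -> supnorm_le f c -> supnorm_le (alpha f) c) ->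
  (forall f c, A f -> supnorm_le f c -> opnorm_le (theta_alpha theta alpha f) c) ->
  forall f, A f -> numrange (theta_alpha theta alpha f) `<=` conv (spectrum A f).
Proof.
move=> [[cX _ cont] [Aconst Alin _ _]] hom _ Aal anti al1 _ hTA f Af z [x [hx hz]].
have DiskC (a : R[i]) (r : R) : 0 < r -> (forall y, `|f y - a| <= (r%:C)%C) ->
    `|z - a| <= (r%:C)%C.
  move=> r0 H.
  have Ag : A (fun y => (-a) * (fun _ => (1 : R[i])) y + f y) by apply: Alin.
  have E := @shift _ _ A n theta alpha (Aconst 1) hom Aal anti al1 f Af a.
  have hop : opnorm_le (theta_alpha theta alpha f - a *: 1%:M) r.
    rewrite -E; apply: hTA Ag _ => y; rewrite mulr1 addrC; exact: H.
  have := @est _ _ _ _ r r0 hx hop.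
  suff -> : (adjmx x *m ((theta_alpha theta alpha f - a *: 1%:M) *m x)) 0 0 = z - a by [].
  rewrite hz mulmxBl -[(a *: 1%:M) *m x]scalemxAl mul1mx mulmxBr -[adjmx x *m (a *: x)]scalemxAr !mxE.
  congr (_ - _); rewrite -[RHS]mulr1; congr (_ * _).
  have <- : vnorm x ^+ 2 = 1 by rewrite hx expr1n.
  rewrite /vnorm sqrtCK; apply: eq_bigr => i _.
  by rewrite !mxE normCK mulrC.
pose fx y := complex.Re (f y - z).
pose fy y := complex.Im (f y - z).
have cfx : continuous fx by apply: cont_Re; exact: cont.
have cfy : continuous fy by apply: cont_Im; exact: cont.
have DiskR (ax ay r : R) : 0 < r ->
    (forall y, (fx y - ax) ^+ 2 + (fy y - ay) ^+ 2 <= r ^+ 2) -> ax ^+ 2 + ay ^+ 2 <= r ^+ 2.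
  move=> r0 H.
  have := DiskC (z + (ax +i* ay)%C) r r0.
  have Hy y : `|f y - (z + (ax +i* ay)%C)| <= (r%:C)%C.
    rewrite normc_nr lecR /nr.
    rewrite (_ : f y - (z + (ax +i* ay)%C) = (f y - z) - (ax +i* ay)%C); last by rewrite opprD addrA.
    rewrite ReB ImB /= -/(fx y) -/(fy y).
    rewrite -(@ger0_norm _ r) ?(ltW r0) // -sqrtr_sqr; apply: ler_wsqrtr; exact: H.
  move=> /(_ Hy); rewrite opprD addrA subrr add0r normc_nr lecR /nr /=.
  move=> hs; have hs0 : 0 <= ax ^+ 2 + ay ^+ 2 by rewrite addr_ge0 // sqr_ge0.
  rewrite !sqrrN in hs; rewrite -(sqr_sqrtr hs0).
  by rewrite ler_pXn2r // ?nnegrE ?sqrtr_ge0 // ltW.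
have NS := @disk_NS _ _ cX fx fy cfx cfy DiskR.
have [x1 [x2 [x3 [l1 [l2 [l3 [p1 p2 p3 p4 [q1 q2]]]]]]]] := @geo0 _ _ cX fx fy cfx cfy NS.
exists 3%N, (fun i : 'I_3 => nth 0 [:: l1; l2; l3] i),
  (fun i : 'I_3 => f (nth x1 [:: x1; x2; x3] i)); split.
- by case=> [[|[|[|?]]] ?] //=.
- by rewrite !big_ord_recl big_ord0 /= addr0 addrA.
- move=> i [g [_ Hg]].
  have := Hg (nth x1 [:: x1; x2; x3] i); rewrite subrr mul0r => /eqP.
  by rewrite eq_sym oner_eq0.
rewrite !big_ord_recl big_ord0 /= addr0.
have ef y : f y = z + (fx y +i* fy y)%C.
  by rewrite /fx /fy; case E: (f y - z) => [p q] /=; rewrite -E addrC subrK.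
rewrite !ef.
move: q1 q2; set a1 := fx x1; set a2 := fx x2; set a3 := fx x3.
set b1 := fy x1; set b2 := fy x2; set b3 := fy x3 => q1 q2.
have [zr [zi ez]] : exists zr zi, z = (zr +i* zi)%C by case: (z) => zr zi; exists zr, zi.
rewrite ez; apply/eqP; rewrite eq_complex /=; apply/andP; split; apply/eqP.
  transitivity (zr * (l1 + l2 + l3) + (l1 * a1 + l2 * a2 + l3 * a3)).
    by rewrite p4 q1; ring.
  by ring.
transitivity (zi * (l1 + l2 + l3) + (l1 * b1 + l2 * b2 + l3 * b3)).
  by rewrite p4 q2; ring.
by ring.
Qed.
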